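(* Let $k\geq 2$ be an integer. For every finite simple graph $G$ with minimum degree $\delta(G)\geq k-1$, $$\gamma_{\times k}(G)\leq k\,\gamma_{k}(G)-(k-1)^2.$$
   Context: All graphs are finite and simple, with vertex set $V(G)$. For $v\in V(G)$, $N(v)$ is its open neighbourhood, and for $D\subseteq V(G)$, $\deg_D(v)=|N(v)\cap D|$. $\delta(G)$ denotes the minimum degree of $G$. A set $D\subseteq V(G)$ is a $k$-dominating set of $G$ if $\deg_D(v)\geq k$ for every $v\in V(G)\setminus D$; the $k$-domination number $\gamma_k(G)$ is the minimum cardinality of a $k$-dominating set. For a positive integer $k\leq \delta(G)+1$, a $k$-tuple dominating set of $G$ is a $k$-dominating set $D$ such that additionally $\deg_D(v)\geq k-1$ for every $v\in D$ (equivalently, every vertex has at least $k$ vertices of $D$ in its closed neighbourhood); the $k$-tuple domination number $\gamma_{\times k}(G)$ is the minimum cardinality of a $k$-tuple dominating set. *)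

(* Defs.v *)
From mathcomp Require Import all_boot all_order all_algebra.
Set Implicit Arguments. Unset Strict Implicit. Unset Printing Implicit Defensive.

Definition simple_graph (T : finType) (e : rel T) : Prop :=
  symmetric e /\ irreflexive e.

Definition nbhd (T : finType) (e : rel T) (v : T) : {set T} := [set u | e v u].

Definition degIn (T : finType) (e : rel T) (D : {set T}) (v : T) : nat :=
  #|nbhd e v :&: D|.

Definition min_degree_ge (T : finType) (e : rel T) (m : nat) : Prop :=
  forall v : T, m <= #|nbhd e v|.

Definition k_dominating (T : finType) (e : rel T) (k : nat) (D : {set T}) : bool :=
  [forall v, (v \notin D) ==> (k <= degIn e D v)].

Definition k_tuple_dominating (T : finType) (e : rel T) (k : nat) (D : {set T}) : bool :=
  k_dominating e k D && [forall v, (v \in D) ==> (k.-1 <= degIn e D v)].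

(* minimum cardinality; [set: T] always qualifies as a k-dominating set, and as a
   k-tuple dominating set when delta(G) >= k-1, so the default #|T| is never the
   artificial value under the theorem's hypotheses. *)
Definition gamma_k (T : finType) (e : rel T) (k : nat) : nat :=
  \big[minn/#|T|]_(D : {set T} | k_dominating e k D) #|D|.

Definition gamma_xk (T : finType) (e : rel T) (k : nat) : nat :=
  \big[minn/#|T|]_(D : {set T} | k_tuple_dominating e k D) #|D|.

(* Main.v *)
Require Import Defs.
From mathcomp Require Import all_boot all_order all_algebra.
From mathcomp Require Import zify.
Import GRing.Theory Num.Theory.

Lemma arith (k g m t a : nat) : 2 <= k -> k <= g -> t + a = g -> m <= t * k.-1 ->
  m * k <= t * k.-1 + a * m -> g + m + k.-1 ^ 2 <= k * g.
Proof.
move=> k2 kg tag A B.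
case: k k2 kg A B => // c _ kg; rewrite succnK => A B.
have [h hdef] : exists h, g = c.+1 + h by exists (g - c.+1); lia.
rewrite {}hdef in tag kg *.
suff key : m <= c * h.+1.
  have E : c.+1 * (c.+1 + h) = c.+1 + h + c * h.+1 + c ^ 2.
    rewrite mulSn mulnDr !mulnS expnS expn1; lia.
  rewrite E leq_add2r leq_add2l. exact key.
have [ac|ac] := leqP c a.
  apply: (@leq_trans (t * c)) => //.
  rewrite (mulnC t c); apply: leq_mul => //; lia.
have [b def] : exists b, c = a + b.+1 by exists (c - a.+1); lia.
have tdef : t = b.+2 + h by lia.
subst t.
have H : m * b.+2 <= (b.+2 + h) * c.
  have E : m * c.+1 = m * a + m * b.+2 by rewrite def -addnS mulnDr.
  move: B; rewrite E (mulnC a m) addnC leq_add2r. done.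
rewrite -(leq_pmul2l (ltn0Sn b.+1)) mulnC (leq_trans H) //.
rewrite mulnCA [(_ + h) * c]mulnC leq_mul2l; apply/orP; right.
by rewrite mulnS leq_add2l leq_pmull.
Qed.

Lemma cnt (T : finType) (e : rel T) (x : T) (A : {set T}) :
  #|nbhd e x :&: A| = \sum_(v in A) (e x v : nat).
Proof.
rewrite -sum1_card [LHS]big_mkcond [RHS]big_mkcond /=.
apply: eq_bigr => v _; rewrite /nbhd !inE.
by case: (e x v); case: (v \in A).
Qed.

Lemma bigmin_le (I : finType) (P : pred I) (F : I -> nat) x0 j :
  P j -> \big[minn/x0]_(i | P i) F i <= F j.
Proof.
move=> Pj.
elim: (index_enum I) (mem_index_enum j) => [|a r IH] //.
rewrite inE big_cons => /orP [/eqP <-|jr].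
  by rewrite Pj geq_minl.
case: (P a) => /=; last exact: IH jr.
exact: leq_trans (geq_minr _ _) (IH jr).
Qed.

Lemma main_nat (k : nat) (T : finType) (e : rel T) :
  2 <= k -> 0 < #|T| -> simple_graph e -> min_degree_ge e k.-1 ->
  gamma_xk e k + k.-1 ^ 2 <= k * gamma_k e k.
Proof.
move=> k2 Tpos [esym eirr] mindeg.
have HsetT : k_dominating e k setT by apply/forallP => v; rewrite in_setT.
case: (@arg_minnP _ setT (k_dominating e k) (fun D => #|D|) HsetT) => D HD Dmin.
have Dle : #|D| <= gamma_k e k.
  rewrite /gamma_k; apply: (big_ind (fun x => #|D| <= x)).
  - exact: max_card.
  - by move=> x y hx hy; rewrite leq_min hx hy.
  - by move=> D' HD'; apply: Dmin.
have HDv : forall v, v \notin D -> k <= #|nbhd e v :&: D|.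
  by move=> v vD; move/forallP: HD => /(_ v) /implyP /(_ vD).
have gk : k <= #|D|.
  case: (pickP (fun v => v \notin D)) => [v vD | allD].
    apply: leq_trans (HDv v vD) _; apply: subset_leq_card; apply: subsetIr.
  have /card_gt0P [v0 _] := Tpos.
  have : #|v0 |: nbhd e v0| <= #|D|.
    apply: subset_leq_card; apply/subsetP => x _; move: (allD x) => /=.
    by case: (x \in D).
  have nv : v0 \notin nbhd e v0 by rewrite /nbhd inE eirr.
  rewrite cardsU1 nv.
  have := mindeg v0. lia.
pose cov (X : {set T}) :=
  (X \subset ~: D) && [forall v in D, k.-1 <= #|nbhd e v :&: (D :|: X)|].
have covO : cov (~: D).
  rewrite /cov subxx /=; apply/forall_inP => v _.
  rewrite setUCr setIT; exact: mindeg.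
case: (@arg_minnP _ (~: D) cov (fun X => #|X|) covO) => X /andP [XO covX] Xmin.
have xnD : forall x, x \in X -> x \notin D.
  by move=> x xX; have := subsetP XO x xX; rewrite inE.
have covXv : forall v, v \in D -> k.-1 <= #|nbhd e v :&: (D :|: X)|.
  by move/forall_inP: covX.
pose T' := [set t in D | #|nbhd e t :&: (D :|: X)| <= k.-1].
have tightx : forall x, x \in X -> exists2 t, t \in T' & e x t.
  move=> x xX.
  have : ~~ cov (X :\ x).
    apply/negP => Hc. have := Xmin _ Hc. rewrite (cardsD1 x X) xX. lia.
  rewrite /cov negb_and (subset_trans (subsetDl X [set x]) XO) /=.
  move=> /forall_inPn [v vD]; rewrite -ltnNge => hv.
  have covv := covXv v vD.
  have evx : e v x.
    apply/negPn/negP => nevx.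
    have : nbhd e v :&: (D :|: X) \subset nbhd e v :&: (D :|: X :\ x).
      apply/subsetP => y; rewrite /nbhd !inE.
      case: (boolP (y == x)) => [/eqP->|ynx]; rewrite ?eqxx ?ynx ?(negbTE nevx) //=.
    move/subset_leq_card; lia.
  have sub : nbhd e v :&: (D :|: X) \subset x |: (nbhd e v :&: (D :|: X :\ x)).
    apply/subsetP => y; rewrite /nbhd !inE.
    by case: (y == x).
  exists v; last by rewrite esym.
  rewrite inE vD /=.
  have := subset_leq_card sub; rewrite cardsU1.
  have := leq_b1 (x \notin nbhd e v :&: (D :|: X :\ x)).
  lia.
have tightsum : forall t, t \in T' -> \sum_(x in X) (e x t : nat) <= k.-1.
  move=> t tT.
  under eq_bigr => x _ do rewrite esym.
  rewrite -cnt.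
  apply: (@leq_trans #|nbhd e t :&: (D :|: X)|).
    apply: subset_leq_card; apply: setIS; apply: subsetUr.
  by move: tT; rewrite inE => /andP [].
have FA : \sum_(x in X) 1 <= \sum_(t in D :&: T') k.-1.
  apply: (@leq_trans (\sum_(x in X) \sum_(t in D :&: T') (e x t : nat))).
    apply: leq_sum => x xX.
    have [t tT ext] := tightx x xX.
    rewrite (bigD1 t) /=; last first.
      rewrite in_setI tT andbT; by move: tT; rewrite inE => /andP [].
    by rewrite ext /= leq_addr.
  rewrite exchange_big /=; apply: leq_sum => t.
  rewrite in_setI => /andP [_ tT]; exact: tightsum.
have FB : \sum_(x in X) k <= \sum_(v in D :&: T') k.-1 + \sum_(v in D :\: T') #|X|.
  apply: (@leq_trans (\sum_(x in X) \sum_(v in D) (e x v : nat))).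
    apply: leq_sum => x xX; rewrite -cnt; exact: HDv (xnD x xX).
  rewrite exchange_big (big_setID T') /=.
  apply: leq_add; apply: leq_sum => v.
    rewrite in_setI => /andP [_ vT]; exact: tightsum.
  move=> _; rewrite -sum1_card; apply: leq_sum => x _; exact: leq_b1.
rewrite sum1_card sum_nat_const in FA.
rewrite !sum_nat_const in FB.
have AR := @arith _ _ _ _ _ k2 gk (cardsID T' D) FA FB.
have Htup : k_tuple_dominating e k (D :|: X).
  apply/andP; split; apply/forallP => v; apply/implyP.
    rewrite inE negb_or => /andP [vD _]; rewrite /degIn.
    apply: leq_trans (HDv v vD) _.
    apply: subset_leq_card; apply: setIS; apply: subsetUl.
  rewrite inE => /orP [vD|vX]; rewrite /degIn; first exact: covXv.
  apply: leq_trans (leq_pred k) _; apply: leq_trans (HDv v (xnD v vX)) _.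
  apply: subset_leq_card; apply: setIS; apply: subsetUl.
have G1 : gamma_xk e k <= #|D :|: X|.
  by rewrite /gamma_xk; apply: bigmin_le.
have G2 : #|D :|: X| <= #|D| + #|X| := (leq_card_setU D X).1.
have G3 : k * #|D| <= k * gamma_k e k := leq_mul (leqnn k) Dle.
lia.
Qed.

Local Open Scope ring_scope.

Theorem mainTheorem1 (k : nat) (T : finType) (e : rel T) :
  (2 <= k)%N -> (0 < #|T|)%N -> simple_graph e -> min_degree_ge e k.-1 ->
  ((gamma_xk e k)%:Z <= (k * gamma_k e k)%:Z - ((k.-1) ^ 2)%:Z).
Proof.
move=> k2 Tpos sg md.
by rewrite lerBrDr -PoszD lez_nat main_nat.
Qed.
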